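(* Let $n,m\geq 1$, let $(T_1,\dots,T_n)\in\mathscr H_m(n)$ and let $H_n=\Phi(T_1,\dots,T_n)$ be the corresponding $(2m+1)$-historic tree. Then: (i) the number of external vertices of $H_n$ equals the number of leaves of $T_n$; (ii) the number of branchings of $H_n$ equals the number of keys of $T_n$ that are not stored in leaves; (iii) if $n\geq 2m+1$, then for every $i$, letting $v$ be the $i$-th external vertex of $H_n$ from the left and $s$ the number of internal vertices of $H_n$ strictly between $v$ and the closest branching above $v$ (the nearest branching on the path from $v$ to the root), the $i$-th leaf of $T_n$ from the left contains exactly $m+s$ keys.
   Context: Fix an integer $m\geq 1$. A $B$-tree of order $2m+1$ is a rooted plane tree whose nodes contain pairwise distinct real keys such that: keys are stored in increasing order from left to right; a non-leaf node with $k$ keys has exactly $k+1$ children, the $i$-th child being attached between the $(i-1)$-th and $i$-th key of the node, with all keys in the subtree of that child lying between those two keys; every node contains between $m$ and $2m$ keys, except the root, which contains between $1$ and $2m$ keys; and all leaves have the same distance to the root. Insertion algorithm: a new key is placed in the appropriate leaf at the appropriate position; if that leaf now has $2m+1$ keys, it is split: its median key moves up into the parent node, and the $m$ smallest and the $m$ largest keys form two new nodes, which become children of the parent on either side of the moved key; this is repeated at the parent if it now has $2m+1$ keys; if the root gets $2m+1$ keys, a new root containing only its median is created above it, with the two halves as children. $B$-trees are considered up to isomorphism of rooted plane trees; leaves are numbered from left to right. A history $(T_1,\dots,T_n)$ is a sequence of $B$-trees of order $2m+1$ with $T_1$ the single node with one key and $T_i$ obtained from $T_{i-1}$ by inserting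 one key; $\mathscr H_m(n)$ is the set of all histories of length $n$. A $(2m+1)$-historic tree on $n$ vertices is a rooted plane tree with vertices labelled bijectively by $\{1,\dots,n\}$, labels increasing along every root-to-leaf path, such that (root at height $0$) vertices at heights $2m+j(m+1)$, $j\geq0$, called branchings, have two ordered child slots (left, right), each possibly occupied, and all other vertices have a single child slot. Tree vertices are internal; unoccupied slots are external vertices, ordered left to right. The map $\Phi$: $\Phi(T_1)$ is the one-vertex tree; if $\Phi(T_1,\dots,T_k)=H_k$ and $T_{k+1}$ arises from $T_k$ by inserting a key into the $i$-th leaf of $T_k$ (before splits), then $\Phi(T_1,\dots,T_{k+1})$ is obtained from $H_k$ by placing a vertex labelled $k+1$ at the $i$-th external vertex of $H_k$. *)

(* Defs.v *)
From mathcomp Require Import all_boot.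
Set Implicit Arguments. Unset Strict Implicit. Unset Printing Implicit Defensive.

(* B-trees of order 2m+1, up to isomorphism of rooted plane trees.          *)
(* Only the shape and the number of keys per node matter:                   *)
(* [BNode k cs] is a node with k keys and children cs ([::] for a leaf).    *)
Inductive btree := BNode of nat & seq btree.

Fixpoint leaf_keys (t : btree) : seq nat :=
  match t with
  | BNode k [::] => [:: k]
  | BNode _ cs => flatten (map leaf_keys cs)
  end.

Definition nleaves (t : btree) : nat := size (leaf_keys t).

Fixpoint inner_keys (t : btree) : nat :=
  match t with
  | BNode _ [::] => 0
  | BNode k cs => k + sumn (map inner_keys cs)
  end.

(* result of inserting into a subtree: either a subtree, or an overflow split
   into two halves whose median key is pushed up into the parent *)
Inductive insres := InsOk of btree | InsSplit of btree & btree.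

(* insert a key into the i-th leaf (0-based, left to right) of t, performing
   the splits of the insertion algorithm (with 2m+1 keys a node splits) *)
Fixpoint ins (m : nat) (t : btree) (i : nat) : insres :=
  match t with
  | BNode k [::] =>
      if k.+1 == (2 * m).+1 then InsSplit (BNode m [::]) (BNode m [::])
      else InsOk (BNode k.+1 [::])
  | BNode k cs =>
      let fix go (cs : seq btree) (i : nat) : seq btree * bool :=
        match cs with
        | [::] => ([::], false)
        | c :: cs' =>
            if i < nleaves c then
              match ins m c i with
              | InsOk c' => (c' :: cs', false)
              | InsSplit l r => (l :: r :: cs', true)
              end
            else let: (cs'', b) := go cs' (i - nleaves c) in (c :: cs'', b)
        end in
      let: (cs', b) := go cs i in
      if b then
        if k.+1 == (2 * m).+1 then
          InsSplit (BNode m (take m.+1 cs')) (BNode m (drop m.+1 cs'))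
        else InsOk (BNode k.+1 cs')
      else InsOk (BNode k cs')
  end.

Definition binsert (m : nat) (t : btree) (i : nat) : btree :=
  match ins m t i with
  | InsOk t' => t'
  | InsSplit l r => BNode 1 [:: l; r]
  end.

Definition bt1 : btree := BNode 1 [::].

(* A history (T_1,...,T_n) is encoded by the sequence s = [:: i_1; ...; i_{n-1}]
   of (0-based) leaf indices: T_{k+1} is obtained from T_k by inserting a key
   into leaf i_k of T_k.  [history_ok] says each index is a leaf of T_k. *)
Fixpoint history_ok (m : nat) (t : btree) (s : seq nat) : bool :=
  match s with
  | [::] => true
  | i :: s' => (i < nleaves t) && history_ok m (binsert m t i) s'
  end.

Definition last_btree (m : nat) (s : seq nat) : btree := foldl (binsert m) bt1 s.

(* (2m+1)-historic trees.  [HNode lab slots]: a vertex labelled lab with its *)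
(* ordered child slots (None = unoccupied slot = external vertex).           *)
Inductive htree := HNode of nat & seq (option htree).

Definition is_branching (m h : nat) : bool :=
  (2 * m <= h) && ((h - 2 * m) %% m.+1 == 0).

Definition hleaf (m h lab : nat) : htree :=
  HNode lab (nseq (if is_branching m h then 2 else 1) None).

Fixpoint n_ext (t : htree) : nat :=
  match t with
  | HNode _ sl => sumn (map (fun o => match o with None => 1 | Some c => n_ext c end) sl)
  end.

Fixpoint nbranch (m h : nat) (t : htree) : nat :=
  match t with
  | HNode _ sl =>
      is_branching m h +
      sumn (map (fun o => match o with None => 0 | Some c => nbranch m h.+1 c end) sl)
  end.

(* place a vertex labelled lab at the i-th (0-based) external vertex of t,
   t being rooted at height h *)
Fixpoint hplace (m h : nat) (t : htree) (i lab : nat) : htree :=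
  match t with
  | HNode l sl =>
      let fix go (sl : seq (option htree)) (i : nat) : seq (option htree) :=
        match sl with
        | [::] => [::]
        | None :: sl' =>
            if i == 0 then Some (hleaf m h.+1 lab) :: sl'
            else None :: go sl' i.-1
        | Some c :: sl' =>
            if i < n_ext c then Some (hplace m h.+1 c i lab) :: sl'
            else Some c :: go sl' (i - n_ext c)
        end in
      HNode l (go sl i)
  end.

(* Phi: H_1 is the one-vertex tree labelled 1; the k-th insertion (into leaf i)
   places a vertex labelled k+1 at the i-th external vertex. *)
Fixpoint phi_aux (m : nat) (H : htree) (k : nat) (s : seq nat) : htree :=
  match s with
  | [::] => H
  | i :: s' => phi_aux m (hplace m 0 H i k.+1) k.+1 s'
  end.

Definition Phi (m : nat) (s : seq nat) : htree := phi_aux m (hleaf m 0 1) 1 s.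

(* For each external vertex v (left to right): Some s where s is the number of
   internal vertices strictly between v and the closest branching above v,
   or None if v has no branching above it.  [acc] is the value for the parent
   context (None at the root). *)
Fixpoint ext_s (m h : nat) (acc : option nat) (t : htree) : seq (option nat) :=
  match t with
  | HNode _ sl =>
      let here := if is_branching m h then Some 0 else omap S acc in
      flatten (map (fun o => match o with
                             | None => [:: here]
                             | Some c => ext_s m h.+1 here c
                             end) sl)
  end.

(* Main.v *)
Require Import Defs.
From mathcomp Require Import all_boot zify.
Set Implicit Arguments. Unset Strict Implicit.

Definition rep (s : seq nat) (i : nat) (F : nat -> seq nat) :=
  take i s ++ F (nth 0 s i) ++ drop i.+1 s.

Lemma rep_cat_l s1 s2 i F : i < size s1 -> rep (s1 ++ s2) i F = rep s1 i F ++ s2.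
Proof.
move=> Hi; rewrite /rep take_cat Hi nth_cat Hi drop_cat.
case: (ltnP i.+1 (size s1)) => H; first by rewrite !catA.
have -> : drop i.+1 s1 = [::] by apply/drop_oversize.
have -> : i.+1 - size s1 = 0 by lia.
by rewrite drop0 !catA cats0.
Qed.

Lemma rep_cat_r s1 s2 i F : size s1 <= i -> rep (s1 ++ s2) i F = s1 ++ rep s2 (i - size s1) F.
Proof.
move=> Hi; rewrite /rep take_cat nth_cat drop_cat.
have -> : (i < size s1) = false by lia.
have -> : (i.+1 < size s1) = false by lia.
have -> : i.+1 - size s1 = (i - size s1).+1 by lia.
by rewrite !catA.
Qed.

Lemma map_rep (f : nat -> nat) (F G : nat -> seq nat) s i :
  i < size s -> (forall x, map f (F x) = G (f x)) ->
  map f (rep s i F) = rep (map f s) i G.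
Proof.
move=> Hi HF; rewrite /rep !map_cat HF (nth_map 0) // map_take map_drop //.
Qed.

Lemma all_rep (p : pred nat) s i F : i < size s -> all p s ->
  (forall x, p x -> all p (F x)) -> all p (rep s i F).
Proof.
move=> Hi Hs HF; have := Hs; rewrite -{1}(cat_take_drop i.+1 s) all_cat => /andP[_ Hd].
rewrite /rep !all_cat Hd andbT HF ?andbT.
  by have := Hs; rewrite -{1}(cat_take_drop i s) all_cat => /andP[].
by move/allP: Hs; apply; apply: mem_nth.
Qed.

Lemma size_rep s i F : i < size s -> size (rep s i F) = size s + (size (F (nth 0 s i))).-1
  -> True.
Proof. by []. Qed.

Section BT.
Variable P : btree -> Type.
Fixpoint allPb (cs : seq btree) : Type :=
  match cs with [::] => unit | c :: cs' => (P c * allPb cs')%type end.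
Hypothesis HP : forall k cs, allPb cs -> P (BNode k cs).
Fixpoint btree_rect' (t : btree) : P t :=
  match t with
  | BNode k cs => HP k ((fix all cs : allPb cs :=
                          match cs with [::] => tt | c :: cs' => (btree_rect' c, all cs') end) cs)
  end.
End BT.

Fixpoint wf (t : btree) : bool :=
  match t with BNode k cs => ((size cs == 0) || (size cs == k.+1)) && all wf cs end.

Definition upd m k := if k.+1 == (2*m).+1 then [:: m; m] else [:: k.+1].
Definition spl m (ks : seq nat) i : nat := ((nth 0 ks i).+1 == (2*m).+1).

Definition go' m := fix go (cs : seq btree) (i : nat) : seq btree * bool :=
        match cs with
        | [::] => ([::], false)
        | c :: cs' =>
            if i < nleaves c then
              match ins m c i with
              | InsOk c' => (c' :: cs', false)
              | InsSplit l r => (l :: r :: cs', true)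
              end
            else let: (cs'', b) := go cs' (i - nleaves c) in (c :: cs'', b)
        end.

Lemma go'_cons m c cs i : go' m (c :: cs) i =
  if i < nleaves c then
    match ins m c i with
    | InsOk c' => (c' :: cs, false)
    | InsSplit l r => (l :: r :: cs, true)
    end
  else let: (cs'', b) := go' m cs (i - nleaves c) in (c :: cs'', b).
Proof. by []. Qed.

Lemma ins_node m k c cs i : ins m (BNode k (c :: cs)) i =
  let: (cs', b) := go' m (c :: cs) i in
  if b then
    if k.+1 == (2 * m).+1 then
      InsSplit (BNode m (take m.+1 cs')) (BNode m (drop m.+1 cs'))
    else InsOk (BNode k.+1 cs')
  else InsOk (BNode k cs').
Proof. by []. Qed.

Lemma leaf_keys_node k cs : 0 < size cs -> leaf_keys (BNode k cs) = flatten (map leaf_keys cs).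
Proof. by case: cs. Qed.
Lemma inner_keys_node k cs : 0 < size cs -> inner_keys (BNode k cs) = k + sumn (map inner_keys cs).
Proof. by case: cs. Qed.

Definition ins_spec m t i (r : insres) : Prop :=
  match r with
  | InsOk t' => [/\ wf t', leaf_keys t' = rep (leaf_keys t) i (upd m)
                 & inner_keys t' = inner_keys t + spl m (leaf_keys t) i]
  | InsSplit l r => [/\ wf l, wf r, leaf_keys l ++ leaf_keys r = rep (leaf_keys t) i (upd m)
                 & inner_keys l + inner_keys r + 1 = inner_keys t + spl m (leaf_keys t) i]
  end.

Lemma all_take_drop (T : Type) (p : pred T) n s : all p s -> all p (take n s) && all p (drop n s).
Proof. by rewrite -{1}(cat_take_drop n s) all_cat. Qed.

Lemma spl_cat_l m s1 s2 i : i < size s1 -> spl m (s1 ++ s2) i = spl m s1 i.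
Proof. by move=> H; rewrite /spl nth_cat H. Qed.
Lemma spl_cat_r m s1 s2 i : size s1 <= i -> spl m (s1 ++ s2) i = spl m s2 (i - size s1).
Proof. by move=> H; rewrite /spl nth_cat ltnNge H. Qed.

Lemma ins_ok m t : forall i, wf t -> i < nleaves t -> ins_spec m t i (ins m t i).
Proof.
elim/btree_rect': t => k cs IH i.
case: cs IH => [|c cs] IH.
  rewrite /nleaves /= => _ Hi; have -> : i = 0 by lia.
  by case: ifP => H; rewrite /= /spl /upd /rep /= H; split.
move=> Hwt.
have /andP[Hsz Hwall] : ((size (c::cs) == 0) || (size (c::cs) == k.+1)) && all wf (c::cs) := Hwt.
have /andP[Hwc Hwcs] : wf c && all wf cs := Hwall.
have Hsz' : size cs = k by move: Hsz => /= /eqP[].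
have Hgo : forall cs i, allPb (fun t => forall i, wf t -> i < nleaves t -> ins_spec m t i (ins m t i)) cs ->
   all wf cs -> i < size (flatten (map leaf_keys cs)) -> forall cs' b, go' m cs i = (cs', b) ->
   [/\ all wf cs', size cs' = size cs + b,
       flatten (map leaf_keys cs') = rep (flatten (map leaf_keys cs)) i (upd m)
     & sumn (map inner_keys cs') + b = sumn (map inner_keys cs) + spl m (flatten (map leaf_keys cs)) i].
  elim=> [|c0 cs0 IHc] i0; first by move=> _ _ /=; rewrite ltn0.
  move=> [Hc0 Hcs0] Hw Hi0 cs' b.
  have /andP[Hw0 Hws0] : wf c0 && all wf cs0 := Hw.
  rewrite go'_cons.
  case: ifP => Hlt.
    rewrite /= spl_cat_l //.
    have := Hc0 i0 Hw0 Hlt.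
    case: (ins m c0 i0) => [c'|l r].
      case=> Hw' Hk' Hi' [<- <-] /=; rewrite Hw' Hws0 Hk' rep_cat_l //; split => //; lia.
    case=> Hwl Hwr Hk' Hi' [<- <-] /=; rewrite Hwl Hwr Hws0 catA Hk' rep_cat_l //; split => //.
      lia.
    lia.
  case E: (go' m cs0 (i0 - nleaves c0)) => [cs'' b'] [<- <-].
  have Hi0' : i0 < size (leaf_keys c0 ++ flatten (map leaf_keys cs0)) := Hi0.
  rewrite size_cat in Hi0'.
  have := IHc (i0 - nleaves c0) Hcs0 Hws0 _ cs'' b' E.
  case; first by rewrite /nleaves in Hlt *; lia.
  move=> Hw' Hs' Hk' Hi' /=; rewrite Hw0 Hw' Hk' rep_cat_r ?spl_cat_r; try by rewrite /nleaves in Hlt; lia.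
  rewrite /nleaves in Hlt Hi' *; split => //; lia.
rewrite ins_node => Hi.
case E: (go' m (c :: cs) i) => [cs' b].
have Hi2 : i < size (flatten (map leaf_keys (c :: cs))) by rewrite /nleaves leaf_keys_node in Hi.
have [Hw' Hs' Hk' Hi'] := Hgo (c :: cs) i IH Hwall Hi2 cs' b E.
have Hpos : 0 < size cs' by rewrite Hs'.
have Hl0 : leaf_keys (BNode k (c :: cs)) = flatten (map leaf_keys (c :: cs)) by [].
have Hn0 : inner_keys (BNode k (c :: cs)) = k + sumn (map inner_keys (c :: cs)) by [].
case: b E Hs' Hi' => E Hs' Hi'; last first.
  rewrite /ins_spec Hl0 Hn0 leaf_keys_node // inner_keys_node // Hk'.
  split => //; last by lia.
  by rewrite /= Hw' Hs' /= Hsz' addn0 eqxx.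
case: ifP => /eqP Hk; rewrite /ins_spec Hl0 Hn0.
  have Hs2 : size cs' = (2*m).+2 by rewrite Hs' /= Hsz'; lia.
  have [Hwtk Hwdr] := andP (all_take_drop m.+1 Hw').
  have Ht : size (take m.+1 cs') = m.+1.
    by rewrite size_take Hs2; case: ifP => //; lia.
  have Hd : size (drop m.+1 cs') = m.+1 by rewrite size_drop Hs2; lia.
  rewrite leaf_keys_node ?Ht //.
  rewrite leaf_keys_node ?Hd //.
  rewrite inner_keys_node ?Ht //.
  rewrite inner_keys_node ?Hd //.
  rewrite -flatten_cat -map_cat cat_take_drop Hk'.
  split => //.
  - by rewrite /= Hwtk Ht eqxx orbT.
  - by rewrite /= Hwdr Hd eqxx orbT.
  move: Hi'; rewrite -[in sumn (map inner_keys cs')](cat_take_drop m.+1 cs') map_cat sumn_cat.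
  lia.
rewrite leaf_keys_node // inner_keys_node // Hk'; split => //.
  by rewrite /= Hw' Hs' /= Hsz' addn1 eqxx.
lia.
Qed.

Lemma binsert_ok m t i : wf t -> i < nleaves t ->
  [/\ wf (binsert m t i), leaf_keys (binsert m t i) = rep (leaf_keys t) i (upd m)
    & inner_keys (binsert m t i) = inner_keys t + spl m (leaf_keys t) i].
Proof.
move=> Hw Hi; have := ins_ok m Hw Hi; rewrite /binsert.
case: (ins m t i) => [t'|l r] //=.
case=> Hl Hr Hk Hin; rewrite Hl Hr cats0 Hk; split => //; lia.
Qed.

Section HT.
Variable P : htree -> Type.
Fixpoint allPh (sl : seq (option htree)) : Type :=
  match sl with [::] => unit
  | o :: sl' => ((if o is Some c then P c else unit) * allPh sl')%type end.
Hypothesis HP : forall k sl, allPh sl -> P (HNode k sl).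
Fixpoint htree_rect' (t : htree) : P t :=
  match t with
  | HNode k sl => HP k ((fix all sl : allPh sl :=
                          match sl with [::] => tt
                          | o :: sl' => (match o return (if o is Some c then P c else unit) with
                                         | Some c => htree_rect' c | None => tt end, all sl') end) sl)
  end.
End HT.

Fixpoint ext_h (h : nat) (t : htree) : seq nat :=
  match t with
  | HNode _ sl => flatten (map (fun o => match o with None => [:: h.+1] | Some c => ext_h h.+1 c end) sl)
  end.

Lemma n_ext_h t : forall h, n_ext t = size (ext_h h t).
Proof.
elim/htree_rect': t => k sl IH h /=.
elim: sl IH => [|[c|] sl IHs] //= [Hc Hs].
  by rewrite size_cat (Hc h.+1) IHs.
by rewrite IHs.
Qed.

Definition gg m x := if x <= 2*m then None else Some ((x - 2*m - 1) %% m.+1).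

Lemma here_eq m h :
  (if is_branching m h then Some 0 else omap S (gg m h)) = gg m h.+1.
Proof.
rewrite /is_branching /gg.
case: (ltngtP h (2*m)) => Hh.
- by [].
- have E1 : h.+1 - 2*m - 1 = (h - 2*m - 1).+1 by lia.
  have E2 : h - 2*m = (h - 2*m - 1).+1 by lia.
  rewrite E1; move: E2; set a := h - 2*m - 1 => E2; rewrite E2.
  by rewrite modnS; case: (m.+1 %| _).
- rewrite Hh subnn mod0n /=.
  have -> : (2*m).+1 - 2*m - 1 = 0 by lia.
  by rewrite mod0n.
Qed.


Lemma ext_s_h m t : forall h, ext_s m h (gg m h) t = map (gg m) (ext_h h t).
Proof.
elim/htree_rect': t => k sl IH h /=.
rewrite here_eq.
elim: sl IH => [|[c|] sl IHs] //= [Hc Hs].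
  by rewrite map_cat (Hc h.+1) IHs.
by rewrite IHs.
Qed.

Definition hupd m x := nseq (if is_branching m x then 2 else 1) x.+1.

Definition hgo' m h lab := fix go (sl : seq (option htree)) (i : nat) : seq (option htree) :=
        match sl with
        | [::] => [::]
        | None :: sl' =>
            if i == 0 then Some (hleaf m h.+1 lab) :: sl'
            else None :: go sl' i.-1
        | Some c :: sl' =>
            if i < n_ext c then Some (hplace m h.+1 c i lab) :: sl'
            else Some c :: go sl' (i - n_ext c)
        end.

Lemma hplace_node m h l sl i lab : hplace m h (HNode l sl) i lab = HNode l (hgo' m h lab sl i).
Proof. by []. Qed.

Lemma hleaf_ext m h lab : ext_h h (hleaf m h lab) = hupd m h.
Proof. by rewrite /hleaf /hupd; case: ifP => _ //=. Qed.

Lemma hleaf_nb m h lab : nbranch m h (hleaf m h lab) = is_branching m h.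
Proof. by rewrite /hleaf; case: ifP => H /=; rewrite H. Qed.

Lemma hplace_ok m t : forall h i lab, i < size (ext_h h t) ->
  ext_h h (hplace m h t i lab) = rep (ext_h h t) i (hupd m) /\
  nbranch m h (hplace m h t i lab) = nbranch m h t + is_branching m (nth 0 (ext_h h t) i).
Proof.
elim/htree_rect': t => k sl IH h i lab.
rewrite hplace_node.
have E1 : forall sl, ext_h h (HNode k sl) = flatten (map (fun o => match o with None => [:: h.+1] | Some c => ext_h h.+1 c end) sl) by [].
have E2 : forall sl, nbranch m h (HNode k sl) = is_branching m h + sumn (map (fun o => match o with None => 0 | Some c => nbranch m h.+1 c end) sl) by [].
rewrite !E1 !E2.
elim: sl IH i => [|o sl IHs] IH i; first by rewrite ltn0.
move: IH => [Hc Hs].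
case: o Hc => [c|] Hc /=.
  rewrite (n_ext_h c h.+1) nth_cat size_cat => Hi.
  case: ifP => Hlt.
    have [Ha Hb] := Hc h.+1 i lab Hlt.
    rewrite /= Ha Hb rep_cat_l //; split => //; lia.
  have [Ha Hb] := IHs Hs (i - size (ext_h h.+1 c)) ltac:(lia).
  rewrite /= Ha rep_cat_r; last by lia.
  split => //; move: Hb; lia.
case: eqP => [-> _|Hne Hi] /=.
  rewrite /rep /hupd /= drop0; case: (is_branching m h.+1) => /=; split => //; lia.
have [Ha Hb] := IHs Hs i.-1 ltac:(move: Hi Hne => /=; lia).
have Ei : i = (i.-1).+1 by lia.
rewrite /= Ha; split.
  by rewrite [in RHS]Ei /rep.
rewrite Hb [in nth _ _ i]Ei /=; lia.
Qed.

Definition ff m x := if x <= 2*m then x else m + (x - 2*m - 1) %% m.+1.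

Lemma mod_pred_div a d : 0 < d -> d %| a.+1 -> (a %% d).+1 = d.
Proof.
move=> Hd Hdv.
have H1 : (a %% d).+1 %% d = 0 by rewrite -addn1 modnDml addn1; apply/eqP.
have H2 : a %% d < d by rewrite ltn_pmod.
case: (ltngtP (a %% d).+1 d) => H //; last lia.
by rewrite modn_small in H1.
Qed.

Lemma ff_upd m x : 0 < m -> map (ff m) (hupd m x) = upd m (ff m x).
Proof.
move=> Hm; rewrite /hupd /upd /ff /is_branching.
case: (ltngtP x (2*m)) => Hx.
- rewrite /=.
  rewrite Hx; by have -> : (x.+1 == (2*m).+1) = false by lia.
- rewrite /=.
  have E2 : x - 2*m = (x - 2*m - 1).+1 by lia.
  have E1 : x.+1 - 2*m - 1 = (x - 2*m - 1).+1 by lia.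
  move: E1 E2; set a := x - 2*m - 1 => E1 E2; rewrite E2 /=.
  have Hd : 0 < m.+1 by [].
  case: (boolP (m.+1 %| a.+1)) => Hdv.
    have Hdv' := Hdv; rewrite /dvdn in Hdv'; rewrite Hdv' /=.
    have -> : (x < 2*m) = false by lia.
    rewrite E1 (eqP Hdv').
    have H := mod_pred_div Hd Hdv.
    rewrite addn0; by have -> : ((m + a %% m.+1).+1 == (2*m).+1) = true by lia.
  have Hdv' := Hdv; rewrite /dvdn in Hdv'; rewrite (negbTE Hdv') /=.
  have -> : (x < 2*m) = false by lia.
  rewrite E1 modnS (negbTE Hdv).
  have H2 : a.+1 %% m.+1 < m.+1 by rewrite ltn_pmod.
  rewrite modnS (negbTE Hdv) in H2.
  rewrite addnS; by have -> : ((m + a %% m.+1).+1 == (2*m).+1) = false by lia.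
- rewrite Hx subnn mod0n /= eqxx.
  have -> : ((2*m).+1 <= 2*m) = false by lia.
  have -> : (2*m).+1 - 2*m - 1 = 0 by lia.
  by rewrite mod0n addn0.
Qed.

Lemma ff_br m x : 0 < m -> ((ff m x).+1 == (2*m).+1) = is_branching m x.
Proof.
move=> Hm; have := congr1 size (ff_upd x Hm).
rewrite size_map /hupd /upd size_nseq.
by case: (is_branching m x); case: (_ == _).
Qed.

Definition Inv m n t H := [/\ wf t, leaf_keys t = map (ff m) (ext_h 0 H),
  inner_keys t = nbranch m 0 H &
  ((n <= 2*m /\ ext_h 0 H = [:: n]) \/ (2*m < n /\ all (fun x => 2*m < x) (ext_h 0 H)))].

Lemma inv_step m n t H i lab : 0 < m -> Inv m n t H -> i < nleaves t ->
  Inv m n.+1 (binsert m t i) (hplace m 0 H i lab).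
Proof.
move=> Hm [Hw Hk Hn Hp] Hi.
have Hs : i < size (ext_h 0 H) by rewrite /nleaves Hk size_map in Hi.
have [Hw' Hk' Hn'] := binsert_ok m Hw Hi.
have [He Hb] := @hplace_ok m H 0 i lab Hs.
split => //.
- by rewrite Hk' He Hk (map_rep (G := upd m) Hs (fun x => ff_upd x Hm)).
- by rewrite Hn' Hb Hn Hk /spl (nth_map 0) // ff_br.
case: Hp => [[Hn2 Eh]|[Hn2 Ha]].
  move: Hs; rewrite Eh /= ltnS leqn0 => /eqP Ei; subst i.
  rewrite He Eh /rep /= /hupd /is_branching.
  case: (ltngtP n (2*m)) => Hx.
  - by left; split => //; lia.
  - lia.
  - rewrite Hx subnn mod0n /=; right; split; first lia.
    by rewrite /= andbT; lia.
right; split; first lia.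
rewrite He; apply: all_rep => // x Hx.
by rewrite /hupd; case: ifP => _ /=; rewrite ?andbT; move: Hx => /=; lia.
Qed.

Lemma inv_hist m s : 0 < m -> forall n t H k, Inv m n t H -> history_ok m t s ->
  Inv m (n + size s) (foldl (binsert m) t s) (phi_aux m H k s).
Proof.
move=> Hm; elim: s => [|i s IH] n t H k Hinv /=; first by rewrite addn0.
move=> /andP[Hi Hok].
have := IH n.+1 _ _ k.+1 (inv_step k.+1 Hm Hinv Hi) Hok.
by rewrite addSnnS.
Qed.

Lemma inv_init m : 0 < m -> Inv m 1 bt1 (hleaf m 0 1).
Proof.
move=> Hm.
have Hb0 : is_branching m 0 = false.
  by rewrite /is_branching; have -> : (2*m <= 0) = false by lia.
have Ee : ext_h 0 (hleaf m 0 1) = [:: 1] by rewrite hleaf_ext /hupd Hb0.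
split => //.
- rewrite Ee /= /ff; have -> : (1 <= 2*m) = true by lia. by [].
- by rewrite hleaf_nb Hb0.
by left; split => //; lia.
Qed.

Theorem proposition1p2 (m n : nat) (s : seq nat) :
  1 <= m -> 1 <= n -> size s = n.-1 -> history_ok m bt1 s ->
  [/\ n_ext (Phi m s) = nleaves (last_btree m s),
      nbranch m 0 (Phi m s) = inner_keys (last_btree m s)
    & (2 * m).+1 <= n ->
      forall i, i < n_ext (Phi m s) ->
        exists s0, nth None (ext_s m 0 None (Phi m s)) i = Some s0 /\
                   nth 0 (leaf_keys (last_btree m s)) i = m + s0].
Proof.
move=> Hm Hn Hs Hok.
have := @inv_hist m s Hm 1 bt1 (hleaf m 0 1) 1 (inv_init Hm) Hok.
rewrite /Phi /last_btree Hs add1n prednK //.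
set H := phi_aux _ _ _ _; set T := foldl _ _ _.
case=> Hw Hk Hnb Hp; split.
- by rewrite (n_ext_h _ 0) /nleaves Hk size_map.
- by rewrite Hnb.
move=> Hn2 i Hi.
case: Hp => [[H1 _]|[_ Ha]]; first lia.
have Hs' : i < size (ext_h 0 H) by rewrite -n_ext_h.
have Hx : 2*m < nth 0 (ext_h 0 H) i by move/allP: Ha; apply; apply: mem_nth.
exists ((nth 0 (ext_h 0 H) i - 2*m - 1) %% m.+1).
have Eg : gg m 0 = None by rewrite /gg leq0n.
rewrite -Eg ext_s_h (nth_map 0) // Hk (nth_map 0) // /gg /ff leqNgt Hx.
by [].
Qed.
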